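(* Let $(C,\leq)$ be a poset. Then $(C,\leq)$ is a $\downarrow$-poset if and only if for all $c,d\in C$ with $c\leq d$ there exists a $\downarrow$-function $f\colon C\to C$ such that $f(d)=c$.
   Context: A semilattice with identity is a set $S$ with a binary operation (written concatenatively) and an element $1\in S$ such that for all $s,t,u\in S$: $ss=s$, $st=ts$, $(st)u=s(tu)$, and $1s=s$. An action of such an $S$ on a set $C$ is a function $C\times S\to C$, $(c,s)\mapsto cs$, such that $c(st)=(cs)t$ and $c1=c$ for all $c\in C$, $s,t\in S$. Given such an action, define $c\leq d$ on $C$ iff there is $s\in S$ with $ds=c$; this is a partial order. A poset is called a $\downarrow$-poset if it is isomorphic to a poset arising in this way from some action of some semilattice with identity on some set. For a poset $(C,\leq)$, a function $f\colon C\to C$ is a $\downarrow$-function if for all $c,d\in C$: (1) $f(c)\leq c$; (2) $c\leq d$ implies $f(c)\leq f(d)$; (3) $c\leq f(d)$ implies $f(c)=c$. *)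

(* Defs.v *)
Set Implicit Arguments.

Record is_poset (C : Type) (le : C -> C -> Prop) : Prop := {
  po_refl : forall c, le c c;
  po_antisym : forall c d, le c d -> le d c -> c = d;
  po_trans : forall c d e, le c d -> le d e -> le c e }.

Record is_semilattice_with_identity (S : Type) (op : S -> S -> S) (one : S)
  : Prop := {
  sl_idem : forall s, op s s = s;
  sl_comm : forall s t, op s t = op t s;
  sl_assoc : forall s t u, op (op s t) u = op s (op t u);
  sl_one : forall s, op one s = s }.

Record is_action (S : Type) (op : S -> S -> S) (one : S)
  (C : Type) (act : C -> S -> C) : Prop := {
  act_op : forall c s t, act c (op s t) = act (act c s) t;
  act_one : forall c, act c one = c }.

Definition action_le (S C : Type) (act : C -> S -> C) (c d : C) : Prop :=
  exists s, act d s = c.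

Definition order_iso (C D : Type) (le : C -> C -> Prop) (le' : D -> D -> Prop)
  (f : C -> D) : Prop :=
  (exists g : D -> C, (forall c, g (f c) = c) /\ (forall d, f (g d) = d)) /\
  (forall c d, le c d <-> le' (f c) (f d)).

Definition down_poset (C : Type) (le : C -> C -> Prop) : Prop :=
  exists (S : Type) (op : S -> S -> S) (one : S) (D : Type) (act : D -> S -> D)
         (f : C -> D),
    is_semilattice_with_identity op one /\ is_action op one act /\
    order_iso le (action_le act) f.

Definition down_function (C : Type) (le : C -> C -> Prop) (f : C -> C) : Prop :=
  (forall c, le (f c) c) /\
  (forall c d, le c d -> le (f c) (f d)) /\
  (forall c d, le c (f d) -> f c = c).

(* Main.v *)
Require Import Defs.
From Stdlib Require Import FunctionalExtensionality ProofIrrelevance.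

Section Aux.
Variable C : Type.
Variable le : C -> C -> Prop.
Hypothesis HC : is_poset le.

Definition DF := { f : C -> C | down_function le f }.

Lemma DF_eq (a b : DF) : (forall x, proj1_sig a x = proj1_sig b x) -> a = b.
Proof.
  destruct a as [f hf], b as [g hg]; simpl; intro H.
  assert (f = g) by (apply functional_extensionality; exact H).
  subst g. f_equal. apply proof_irrelevance.
Qed.

Lemma df_idem f : down_function le f -> forall x, f (f x) = f x.
Proof. intros [h1 [h2 h3]] x. apply (h3 _ x). apply (po_refl HC). Qed.

Lemma df_comp f g : down_function le f -> down_function le g ->
  down_function le (fun x => g (f x)).
Proof.
  intros [f1 [f2 f3]] [g1 [g2 g3]]. split; [|split].
  - intro c. eapply (po_trans HC); [apply g1| apply f1].
  - intros c d H. apply g2, f2, H.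
  - intros c d H.
    assert (E : g c = c) by (apply (g3 c (f d)); exact H).
    assert (f c = c).
    { apply (f3 c d). eapply (po_trans HC); [exact H| apply g1]. }
    rewrite H0; exact E.
Qed.

Lemma df_comm f g : down_function le f -> down_function le g ->
  forall x, g (f x) = f (g x).
Proof.
  intros Hf Hg x.
  destruct Hf as [f1 [f2 f3]], Hg as [g1 [g2 g3]].
  apply (po_antisym HC).
  - assert (Hz1 : le (g (f x)) (f x)) by apply g1.
    assert (Hz2 : le (g (f x)) (g x)) by (apply g2; apply f1).
    assert (Fz : f (g (f x)) = g (f x)) by (apply (f3 _ x); exact Hz1).
    rewrite <- Fz. apply f2. exact Hz2.
  - assert (Hy1 : le (f (g x)) (g x)) by apply f1.
    assert (Hy2 : le (f (g x)) (f x)) by (apply f2; apply g1).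
    assert (Gy : g (f (g x)) = f (g x)) by (apply (g3 _ x); exact Hy1).
    rewrite <- Gy. apply g2. exact Hy2.
Qed.

Definition DFop (a b : DF) : DF :=
  exist _ (fun x => proj1_sig b (proj1_sig a x))
    (df_comp _ _ (proj2_sig a) (proj2_sig b)).

Lemma df_id : down_function le (fun x => x).
Proof. split; [|split]; intros; auto. apply (po_refl HC). Qed.

Definition DFone : DF := exist _ (fun x => x) df_id.

Lemma DF_sl : is_semilattice_with_identity DFop DFone.
Proof.
  split; intros; apply DF_eq; intro x; simpl.
  - apply df_idem, proj2_sig.
  - symmetry; apply df_comm; apply proj2_sig.
  - reflexivity.
  - reflexivity.
Qed.

Definition DFact (c : C) (s : DF) : C := proj1_sig s c.

Lemma DF_act : is_action DFop DFone DFact.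
Proof. split; intros; reflexivity. Qed.

End Aux.

Theorem theorem1 (C : Type) (le : C -> C -> Prop) (HC : is_poset le) :
  down_poset le <->
  (forall c d : C, le c d -> exists f : C -> C, down_function le f /\ f d = c).
Proof.
  split.
  - intros (S & op & one & D & act & f & Hsl & Hact & [[g [gf fg]] Hiso]) c d Hcd.
    destruct (proj1 (Hiso c d) Hcd) as [s Hs].
    exists (fun x => g (act (f x) s)). split; [split; [|split]|].
    + intro x. apply Hiso. rewrite fg. exists s. reflexivity.
    + intros x y Hxy. apply Hiso. rewrite !fg.
      destruct (proj1 (Hiso x y) Hxy) as [t Ht]. exists t.
      rewrite <- Ht, <- !(act_op Hact), (sl_comm Hsl). reflexivity.
    + intros x y Hxy. apply Hiso in Hxy. rewrite fg in Hxy.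
      destruct Hxy as [t Ht]. rewrite <- (act_op Hact) in Ht.
      rewrite <- Ht, <- (act_op Hact).
      replace (op (op s t) s) with (op s t).
      * rewrite Ht. apply gf.
      * rewrite (sl_comm Hsl (op s t) s), <- (sl_assoc Hsl), (sl_idem Hsl). reflexivity.
    + simpl. rewrite Hs. apply gf.
  - intros H. exists (@DF C le), (@DFop C le HC), (@DFone C le HC), C, (@DFact C le), (fun x => x).
    split; [apply DF_sl|split; [apply DF_act|]].
    split.
    + exists (fun x => x); split; reflexivity.
    + intros c d; split.
      * intro Hcd. destruct (H c d Hcd) as [f [Hf Hfd]].
        exists (exist _ f Hf). exact Hfd.
      * intros [[s Hs] E]. unfold DFact in E; simpl in E. subst c. apply Hs.
Qed.
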